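(* Every finite graph $G$ is $(\lceil \mathrm{mad}(G)/2\rceil+1,\,1)$-choosable.
   Context: The maximum average degree of $G$ is $\mathrm{mad}(G)=\max\{2|E(H)|/|V(H)| : H \text{ a subgraph of } G\}$. A $(k,d)$-list assignment for $G$ assigns to each vertex $v$ a list $L(v)$ of at least $k$ colors such that $|L(x)\cap L(y)|\le d$ whenever $x$ and $y$ are adjacent. $G$ is $(k,d)$-choosable if for every $(k,d)$-list assignment $L$ there is a proper vertex coloring $\varphi$ of $G$ with $\varphi(v)\in L(v)$ for all $v$. *)

(* Defs.v *)
From mathcomp Require Import all_boot all_order all_algebra.
Set Implicit Arguments. Unset Strict Implicit. Unset Printing Implicit Defensive.
Import Order.TTheory GRing.Theory Num.Theory.

Definition simple_graph (T : finType) (e : rel T) : Prop :=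
  symmetric e /\ irreflexive e.

Definition edges (T : finType) (e : rel T) : {set {set T}} :=
  [set [set x; y] | x in T, y in T & e x y].

Definition is_subgraph (T : finType) (e : rel T) (S : {set T}) (F : {set {set T}}) : bool :=
  (F \subset edges e) && [forall f in F, f \subset S].

(* Maximum average degree: max of 2|E(H)|/|V(H)| over (nonempty) subgraphs H
   (0 for the empty graph). *)
Definition mad (T : finType) (e : rel T) : rat :=
  \big[Num.max/0%R]_(H : {set T} * {set {set T}} | is_subgraph e H.1 H.2 && (H.1 != set0))
     ((2 * #|H.2|)%:R / #|H.1|%:R)%R.

Definition kd_list_assignment (T : finType) (e : rel T) (k d : nat)
    (C : finType) (L : T -> {set C}) : Prop :=
  (forall v, k <= #|L v|) /\ (forall x y, e x y -> #|L x :&: L y| <= d).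

Definition kd_choosable (T : finType) (e : rel T) (k d : nat) : Prop :=
  forall (C : finType) (L : T -> {set C}), kd_list_assignment e k d L ->
    exists phi : T -> C, (forall v, phi v \in L v) /\ (forall x y, e x y -> phi x != phi y).

(* Main.v *)
Require Import Defs.
From mathcomp Require Import all_boot all_order all_algebra.
From mathcomp Require Import zify.
Set Implicit Arguments. Unset Strict Implicit. Unset Printing Implicit Defensive.

Definition ori (T : finType) (e o : rel T) : Prop :=
  [/\ (forall x y, o x y -> e x y), (forall x y, e x y -> o x y || o y x)
    & (forall x y, o x y -> ~~ o y x)].

Definition outd (T : finType) (o : rel T) (u : T) := #|[pred y | o u y]|.

Definition flipr (T : finType) (o : rel T) (a b : T) : rel T :=
  fun x y => if (x == a) && (y == b) then false
             else if (x == b) && (y == a) then true else o x y.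

Lemma flip_ori (T : finType) (e o : rel T) a b :
  symmetric e -> ori e o -> o a b -> ori e (flipr o a b).
Proof.
move=> Hs [H1 H2 H3] oab.
have nab : a != b by apply/eqP=> E; move: (H3 _ _ oab); rewrite E in oab *; rewrite oab.
have nba : b != a by rewrite eq_sym.
have nboa := H3 _ _ oab.
split.
- move=> x y; rewrite /flipr; case: ifP => // _.
  case: ifP => [/andP[/eqP-> /eqP->] _|_]; last exact: H1.
  by rewrite Hs; apply: H1.
- move=> x y exy; rewrite /flipr.
  have h := H2 x y exy.
  case: (boolP (x == a)) => [/eqP Ex|nxa]; case: (boolP (y == b)) => [/eqP Ey|nyb];
  rewrite ?Ex ?Ey ?eqxx ?(negPf nab) ?(negPf nba) /= ?orbT //.
  + by rewrite !andbF; rewrite Ex in h.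
  + by rewrite !andbF; rewrite Ey in h.
  + case: (boolP (x == b)) => [/eqP Ex|nxb]; case: (boolP (y == a)) => [/eqP Ey|nya] //=.
- move=> x y; rewrite /flipr.
  have h := H3 x y.
  case: (boolP (x == a)) => [/eqP Ex|nxa]; case: (boolP (y == b)) => [/eqP Ey|nyb];
  rewrite ?Ex ?Ey ?eqxx ?(negPf nab) ?(negPf nba) /= ?orbT //; subst => //.
  + by rewrite !andbF.
  + by rewrite !andbF.
  + case: (boolP (x == b)) => [/eqP Ex|nxb]; case: (boolP (y == a)) => [/eqP Ey|nya] //=; subst => //.
Qed.

Lemma outd_flip (T : finType) (e o : rel T) a b :
  ori e o -> o a b -> forall u, outd (flipr o a b) u + (u == a) = outd o u + (u == b).
Proof.
move=> [H1 H2 H3] oab u.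
have nab : a != b by apply/eqP=> E; move: (H3 _ _ oab); rewrite E in oab *; rewrite oab.
have nboa := H3 _ _ oab.
have nba : b != a by rewrite eq_sym.
rewrite /outd.
case: (eqVneq u a) => [->|nua].
  rewrite (negPf nab) (cardD1 b [pred y | o a y]) inE oab addn0 add1n addnC.
  congr (_ + _); apply: eq_card => y; rewrite !inE /flipr eqxx /= (negPf nab) /=.
  by case: (y == b).
case: (eqVneq u b) => [->|nub].
  rewrite addn0 addn1.
  have -> : #|[pred y | flipr o a b b y]| = #|[predU1 a & [pred y | o b y]]|.
    apply: eq_card => y; rewrite !inE /flipr (negPf nba) /= eqxx /=.
    by case: (y == a).
  by rewrite cardU1 inE nboa.
rewrite !addn0; apply: eq_card => y; rewrite !inE /flipr (negPf nua) (negPf nub) //.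
Qed.

Lemma rev_path (T : finType) (e : rel T) : symmetric e -> forall p o x,
  ori e o -> path o x p -> uniq (x :: p) -> p != [::] ->
  exists o', ori e o' /\ forall u, outd o' u + (u == x) = outd o u + (u == last x p).
Proof.
move=> Hs p; elim: p => [//|y p IH] o x Ho /= /andP[oxy Hp] /andP[].
rewrite inE negb_or => /andP[nxy nxp] Hu _.
have Ho1 := flip_ori Hs Ho oxy.
have Hd1 := outd_flip Ho oxy.
case: p IH Hp nxp Hu => [|z p] IH Hp nxp Hu.
  by exists (flipr o x y); split=> // u; exact: Hd1 u.
have ee' : {in [pred w | w != x] &, o =2 flipr o x y}.
  by move=> a b; rewrite !inE => na nb; rewrite /flipr (negPf na) (negPf nb) /= andbF.
have Hp1 : path (flipr o x y) y (z :: p).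
  rewrite -(eq_in_path ee') //; apply/allP => w; rewrite inE => /orP[/eqP->|wp].
    by rewrite inE eq_sym.
  by rewrite inE; apply: contraNneq nxp => <-.
have [o' [Ho' Hd']] := IH _ _ Ho1 Hp1 Hu isT.
exists o'; split=> // u; have := Hd' u; have := Hd1 u; simpl; lia.
Qed.

Lemma card_sumb (T : finType) (A : {pred T}) : #|A| = \sum_x (x \in A : nat).
Proof. by rewrite -sum1_card big_mkcond; apply: eq_bigr => x _; case: (x \in A). Qed.

Lemma closed_count (T : finType) (e o : rel T) (R : {set T}) m v :
  ori e o -> (forall w u, w \in R -> o w u -> u \in R) -> v \in R -> m < outd o v ->
  (forall w, w \in R -> m <= outd o w) ->
  exists F, is_subgraph e R F /\ m * #|R| < #|F|.
Proof.
move=> [H1 H2 H3] Hcl vR Hv HR.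
set P := [set x : T * T | (x.1 \in R) && o x.1 x.2].
exists [set [set x.1; x.2] | x in P]; split.
- rewrite /is_subgraph; apply/andP; split.
    apply/subsetP => f /imsetP[[a b]]; rewrite inE /= => /andP[aR oab] ->.
    by rewrite /edges; apply/imset2P; exists a b; rewrite ?inE //; apply: H1.
  apply/forallP => f; apply/implyP => /imsetP[[a b]]; rewrite inE /= => /andP[aR oab] ->.
  apply/subsetP => z; rewrite !inE => /orP[/eqP->|/eqP->] //; exact: Hcl oab.
rewrite card_in_imset; last first.
  move=> [a b] [c d]; rewrite !inE /= => /andP[_ oab] /andP[_ ocd] E.
  have : a \in [set c; d] by rewrite -E set21.
  rewrite !inE => /orP[/eqP ac|/eqP ad].
    subst c; have : b \in [set a; d] by rewrite -E set22.
    rewrite !inE => /orP[/eqP ba|/eqP->] //.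
    by subst; move: (H3 _ _ oab); rewrite oab.
  subst d; have : b \in [set c; a] by rewrite -E set22.
  rewrite !inE => /orP[/eqP bc|/eqP ba].
    by subst; move: (H3 _ _ oab); rewrite ocd.
  by subst; move: (H3 _ _ oab); rewrite oab.
have -> : #|P| = \sum_(w in R) outd o w.
  transitivity (\sum_w \sum_u ((w, u) \in P : nat)).
    by rewrite pair_big card_sumb; apply: eq_bigr => [[a b]] _.
  rewrite [RHS]big_mkcond /=; apply: eq_bigr => w _.
  rewrite /outd card_sumb; case: (boolP (w \in R)) => wR.
    by apply: eq_bigr => u _; rewrite !inE /= wR.
  by apply: big1 => u _; rewrite !inE /= (negPf wR).
rewrite mulnC -sum_nat_const (bigD1 v) //= [X in _ < X](bigD1 v) //=.
have : \sum_(i in R | i != v) m <= \sum_(i in R | i != v) outd o i.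
  by apply: leq_sum => i /andP[iR _]; apply: HR.
lia.
Qed.

Lemma good_ori (T : finType) (e : rel T) m : symmetric e -> irreflexive e ->
  (forall (R : {set T}) F, is_subgraph e R F -> R != set0 -> #|F| <= m * #|R|) ->
  exists o, ori e o /\ forall u, outd o u <= m.
Proof.
move=> Hs Hi Hd.
pose o0 : rel T := fun x y => e x y && (enum_rank x < enum_rank y).
have Ho0 : ori e o0.
  split.
  - by move=> x y /andP[].
  - move=> x y exy; rewrite /o0 exy (Hs y x) exy /=.
    have nxy : x != y by apply: contraTneq exy => ->; rewrite Hi.
    have : enum_rank x != enum_rank y by rewrite (inj_eq enum_rank_inj).
    by rewrite neq_ltn.
  - move=> x y /andP[_ lt]; rewrite /o0 negb_and; apply/orP; right.
    by rewrite -leqNgt ltnW.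
pose Phi (o : rel T) := \sum_u (outd o u - m).
suff: forall n o, ori e o -> Phi o = n -> exists o', ori e o' /\ forall u, outd o' u <= m.
  by move=> H; apply: (H (Phi o0) o0).
elim/ltn_ind => n IH o Ho HPhi.
case: (boolP [forall u, outd o u <= m]) => [/forallP H|]; first by exists o.
rewrite negb_forall => /existsP[v]; rewrite -ltnNge => Hv.
case: (boolP [exists w, connect o v w && (outd o w < m)]).
- move=> /existsP[w /andP[/connectP[p Hp Hl] Hw]].
  move: Hl; case: (shortenP Hp) => p' Hp' Hu' _ Hl.
  have nvw : v != w by apply: contraTneq Hw => <-; rewrite -leqNgt ltnW.
  have pn : p' != [::].
    by case: p' Hp' Hu' Hl => //= _ _ E; rewrite E eqxx in nvw.
  have [o' [Ho' Hd']] := rev_path Hs Ho Hp' Hu' pn.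
  rewrite -Hl in Hd'.
  apply: (IH (Phi o')); last reflexivity; last exact: Ho'.
  have pt : forall u, (outd o' u - m) + (u == v) = outd o u - m.
    move=> u; have := Hd' u.
    case: (eqVneq u v) => [->|nuv].
      by rewrite (negPf nvw); lia.
    case: (eqVneq u w) => [->|nuw]; lia.
  have E : \sum_u (outd o u - m) = \sum_u (outd o' u - m) + 1.
    under eq_bigr => u _ do rewrite -pt.
    rewrite big_split /=; congr (_ + _).
    rewrite (bigD1 v) //= eqxx big1 //.
    by move=> u /negPf ->.
  rewrite -HPhi /Phi E; lia.
- move/existsPn => Hno.
  set R := [set w | connect o v w].
  have vR : v \in R by rewrite inE connect0.
  have [F [HF Hlt]] := closed_count (R:=R) Ho
    (fun w u => ltac:(rewrite !inE => cw owu; exact: connect_trans cw (connect1 owu))) vR Hv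
    (fun w => ltac:(rewrite inE => cw; have := Hno w; rewrite cw /= -leqNgt; exact)).
  have : R != set0 by apply/set0Pn; exists v.
  move/(Hd R F HF); lia.
Qed.

Import Order.TTheory GRing.Theory Num.Theory.

Lemma mad_ge0 (T : finType) (e : rel T) : (0 <= mad e)%R.
Proof.
rewrite /mad; apply: (big_ind (fun x : rat => 0 <= x)%R).
- by [].
- by move=> x y hx hy; rewrite le_max hx.
- by move=> i _; rewrite divr_ge0.
Qed.

Lemma mad_bound (T : finType) (e : rel T) m : (mad e <= (2 * m)%:R)%R ->
  forall (R : {set T}) F, is_subgraph e R F -> R != set0 -> #|F| <= m * #|R|.
Proof.
move=> H R F HF R0.
have : ((2 * #|F|)%:R / #|R|%:R <= mad e :> rat)%R.
  by rewrite /mad (bigD1 (R, F)) /=; [rewrite le_max lexx | rewrite HF R0].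
move/le_trans/(_ H).
rewrite ler_pdivrMr ?ltr0n ?card_gt0 // -natrM ler_nat; lia.
Qed.

Theorem lemma1 (T : finType) (e : rel T) :
  simple_graph e ->
  kd_choosable e (`|Num.ceil (mad e / 2%:R)%R|%N + 1) 1.
Proof.
move=> [Hs Hi] C L [HL1 HL2].
set m := `|Num.ceil (mad e / 2%:R)%R|%N.
have Hmad : (mad e <= (2 * m)%:R)%R.
  have c0 : (0 <= Num.ceil (mad e / 2%:R))%R.
    rewrite ceil_ge0; apply: (@lt_le_trans _ _ 0%R) => //.
    by rewrite divr_ge0 ?mad_ge0.
  have := ceil_ge (mad e / 2%:R).
  rewrite -[Num.ceil _]gez0_abs // -natr_absz -/m ler_pdivrMr ?ltr0n // => h.
  by rewrite natrM mulrC.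
have [o [[H1 H2 H3] Ho]] := good_ori Hs Hi (mad_bound Hmad).
pose B v := [set c | [exists u, o v u && (c \in L u)]].
have ex : forall v, exists c, c \in L v :\: B v.
  move=> v; apply/set0Pn; rewrite -card_gt0.
  suff : #|L v :&: B v| <= m by have := cardsID (B v) (L v); have := HL1 v; lia.
  apply: leq_trans (Ho v).
  pose f c := odflt v [pick u | o v u && (c \in L u)].
  have Hf : forall c, c \in L v :&: B v -> o v (f c) && (c \in L (f c)).
    move=> c; rewrite !inE => /andP[cL /existsP[u hu]].
    by rewrite /f; case: pickP => [u' hu' | /(_ u)] //=; rewrite hu.
  rewrite -(card_in_imset (f := f)).
    apply: subset_leq_card; apply/subsetP => u /imsetP[c cB ->].
    by have /andP[] := Hf _ cB.
  move=> c1 c2 h1 h2 E.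
  have /andP[o1 l1] := Hf _ h1; have /andP[o2 l2] := Hf _ h2.
  rewrite -E in l2.
  have lv1 : c1 \in L v by move: h1; rewrite inE => /andP[].
  have lv2 : c2 \in L v by move: h2; rewrite inE => /andP[].
  have /card_le1_eqP := HL2 _ _ (H1 _ _ o1); apply; by rewrite inE ?lv1 ?lv2 ?l1 ?l2.
exists (fun v => xchoose (ex v)); split.
  by move=> v; have := xchooseP (ex v); rewrite inE => /andP[].
move=> x y exy.
have Px := xchooseP (ex x); have Py := xchooseP (ex y).
move: Px Py; rewrite !inE => /andP[nBx Lx] /andP[nBy Ly].
case/orP: (H2 _ _ exy) => oxy; apply/eqP => E.
  by move: nBx; rewrite E => /existsPn/(_ y); rewrite oxy Ly.
by move: nBy; rewrite -E => /existsPn/(_ x); rewrite oxy Lx.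
Qed.
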